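(* For a graph $G$ without isolated vertices, the following are equivalent: (1) $G$ is very well-covered; (2) $G$ has a perfect matching every edge of which (as a $2$-vertex set) is a strong clique; (3) $G$ has a perfect matching, and every edge of every perfect matching of $G$ is a strong clique; (4) $V(G)$ admits a partition into strong cliques of size two. In particular, every very well-covered graph is localizable.
   Context: A clique is strong if it intersects every maximal independent set. A graph is localizable if its vertex set admits a partition into strong cliques. A graph is well-covered if all its maximal independent sets have the same size; it is very well-covered if it is well-covered, has no isolated vertices, and $\alpha(G)=|V(G)|/2$, where $\alpha(G)$ is the independence number. *)

(* Defs.v *)
From mathcomp Require Import all_boot.
Set Implicit Arguments. Unset Strict Implicit. Unset Printing Implicit Defensive.

Section Graphs.
Variables (T : finType) (e : rel T).

Definition simple_graph : Prop := symmetric e /\ irreflexive e.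

Definition isolated (x : T) : bool := [forall y, ~~ e x y].
Definition no_isolated : Prop := forall x : T, ~~ isolated x.

Definition independent (A : {set T}) : bool :=
  [forall x in A, forall y in A, ~~ e x y].

Definition maximal_independent (A : {set T}) : bool :=
  maxset independent A.

Definition clique (C : {set T}) : bool :=
  [forall x in C, forall y in C, (x != y) ==> e x y].

Definition strong_clique (C : {set T}) : bool :=
  clique C && [forall I : {set T}, maximal_independent I ==> (C :&: I != set0)].

Definition alpha : nat := \max_(A : {set T} | independent A) #|A|.

Definition well_covered : Prop :=
  forall A B : {set T}, maximal_independent A -> maximal_independent B -> #|A| = #|B|.

Definition very_well_covered : Prop :=
  well_covered /\ no_isolated /\ 2 * alpha = #|T|.

Definition is_edge (S : {set T}) : bool :=
  [exists x, exists y, (x != y) && e x y && (S == [set x; y])].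

Definition perfect_matching (M : {set {set T}}) : bool :=
  partition M [set: T] && [forall S in M, is_edge S].

Definition localizable : Prop :=
  exists P : {set {set T}}, partition P [set: T] && [forall C in P, strong_clique C].
End Graphs.

(* Main.v *)
Require Import Defs.
From mathcomp Require Import all_boot zify.
Set Implicit Arguments. Unset Strict Implicit. Unset Printing Implicit Defensive.

Section HallS.
Variable T : finType.
Definition Nb (F : T -> {set T}) (S : {set T}) := \bigcup_(x in S) F x.

Lemma hall_n n : forall (D : {set T}) (F : T -> {set T}), #|D| <= n ->
  (forall S : {set T}, S \subset D -> #|S| <= #|Nb F S|) ->
  exists f : T -> T, (forall x, x \in D -> f x \in F x) /\ {in D &, injective f}.
Proof.
elim: n => [|n IH] D F hD hH.
  exists id; split => [x xD|x y xD]; last by [].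
  by move: hD; rewrite leqn0 => /eqP/cards0_eq D0; rewrite D0 inE in xD.
case: (boolP [exists S : {set T}, [&& S \proper D, S != set0 & #|Nb F S| <= #|S|]]).
- case/existsP => S0 /and3P [pS0 nS0 cS0].
  have sS0 : S0 \subset D by case/properP: pS0.
  have [f1 [f1F f1i]] : exists f : T -> T, (forall x, x \in S0 -> f x \in F x) /\ {in S0 &, injective f}.
    apply: IH; first by have := proper_card pS0; lia.
    by move=> S sS; apply: hH; apply: subset_trans sS sS0.
  set N0 := Nb F S0.
  have [f2 [f2F f2i]] : exists f : T -> T, (forall x, x \in D :\: S0 -> f x \in F x :\: N0) /\ {in D :\: S0 &, injective f}.
    apply: IH.
      have : 0 < #|S0| by rewrite card_gt0.
      have := cardsID S0 D; rewrite (setIidPr sS0); lia.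
    move=> S sS.
    have dS : S :&: S0 = set0.
      apply/setP => x; rewrite !inE; apply/negP => /andP [/(subsetP sS)].
      by rewrite inE => /andP [/negP].
    have h1 := hH (S :|: S0); rewrite subUset sS0 andbT in h1.
    have h2 : S :|: S0 \subset D by rewrite subUset sS0 andbT; apply: subset_trans sS (subsetDl _ _).
    have := hH _ h2; rewrite (cardsU S S0) dS cards0 subn0 /Nb bigcup_setU.
    rewrite cardsU => h3.
    have h4 : (\bigcup_(i in S) F i) :\: N0 \subset Nb (fun x => F x :\: N0) S.
      apply/subsetP => y; rewrite inE => /andP [yN /bigcupP [x xS yF]].
      by apply/bigcupP; exists x => //; rewrite inE yN.
    have h5 := subset_leq_card h4.
    rewrite cardsD in h5.
    have h6 : #|\bigcup_(i in S) F i :&: N0| <= #|N0| by apply: subset_leq_card; apply: subsetIr.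
    rewrite -/N0 in h3.
    have h7 : #|(\bigcup_(i in S) F i) :&: N0| = #|N0 :&: (\bigcup_(i in S) F i)| by rewrite setIC.
    move: cS0; rewrite -/N0 => cS0.
    change (\bigcup_(i in S0) F i) with N0 in h3.
    rewrite /Nb in h5 *.
    lia.
  exists (fun x => if x \in S0 then f1 x else f2 x); split.
    move=> x xD; case: ifP => xS; first exact: f1F.
    by have := f2F x; rewrite !inE xS xD => /(_ isT); case/andP.
  move=> x y xD yD /=.
  have f1N : forall z, z \in S0 -> f1 z \in N0 by move=> z zS; apply/bigcupP; exists z => //; exact: f1F.
  have f2N : forall z, z \in D -> z \notin S0 -> f2 z \notin N0.
    by move=> z zD zS; have := f2F z; rewrite !inE zS zD => /(_ isT); case/andP.
  case: ifP => xS; case: ifP => yS.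
  + exact: f1i.
  + by move=> E; have := f2N _ yD (negbT yS); rewrite -E f1N.
  + by move=> E; have := f2N _ xD (negbT xS); rewrite E f1N.
  + by apply: f2i; rewrite inE ?xS ?yS /= ?xD ?yD.
- rewrite negb_exists => /forallP hnc.
  case: (set_0Vmem D) => [->|[x0 x0D]].
    by exists id; split => [x|x y]; rewrite inE.
  have : 0 < #|F x0|.
    have := hH [set x0]; rewrite sub1set x0D /Nb big_set1 cards1; by move/(_ isT).
  rewrite card_gt0 => /set0Pn [y0 y0F].
  have [f2 [f2F f2i]] : exists f : T -> T, (forall x, x \in D :\ x0 -> f x \in F x :\ y0) /\ {in D :\ x0 &, injective f}.
    apply: IH.
      by have := cardsD1 x0 D; rewrite x0D; lia.
    move=> S sS.
    case: (set_0Vmem S) => [->|[z zS]]; first by rewrite cards0.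
    have pS : S \proper D.
      apply/properP; split; first by apply: subset_trans sS (subsetDl _ _).
      by exists x0 => //; apply/negP => /(subsetP sS); rewrite !inE eqxx.
    have := hnc S; rewrite pS /= => /nandP [/negPn/eqP S0|]; first by rewrite S0 inE in zS.
    rewrite -ltnNge => hlt.
    have h4 : (Nb F S) :\ y0 \subset Nb (fun x => F x :\ y0) S.
      apply/subsetP => y; rewrite !inE => /andP [yN /bigcupP [x xS yF]].
      by apply/bigcupP; exists x => //; rewrite !inE yN.
    have h5 := subset_leq_card h4.
    have := cardsD1 y0 (Nb F S).
    case: (y0 \in Nb F S); lia.
  exists (fun x => if x == x0 then y0 else f2 x); split.
    move=> x xD; case: eqP => [->//|/eqP xn].
    by have := f2F x; rewrite !inE xn xD => /(_ isT); case/andP.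
  have f2N : forall z, z \in D -> z != x0 -> f2 z != y0.
    by move=> z zD zS; have := f2F z; rewrite !inE zS zD => /(_ isT); case/andP.
  move=> x y xD yD /=.
  case: eqP => [->|/eqP xn]; case: eqP => [->//|/eqP yn].
  + by move=> E; have := f2N _ yD yn; rewrite -E eqxx.
  + by move=> E; have := f2N _ xD xn; rewrite E eqxx.
  + by apply: f2i; rewrite !inE ?xn ?yn ?xD ?yD.
Qed.

Lemma hall (D : {set T}) (F : T -> {set T}) :
  (forall S : {set T}, S \subset D -> #|S| <= #|Nb F S|) ->
  exists f : T -> T, (forall x, x \in D -> f x \in F x) /\ {in D &, injective f}.
Proof. exact: (@hall_n #|D|). Qed.
End HallS.

Section Graph.
Lemma indP (T : finType) (e : rel T) (A : {set T}) :
  reflect (forall x y, x \in A -> y \in A -> ~~ e x y) (independent e A).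
Proof.
apply: (iffP forall_inP) => [h x y xA yA | h x xA]; first exact: (forall_inP (h x xA)).
by apply/forall_inP => y yA; exact: h.
Qed.

Lemma ind_sub (T : finType) (e : rel T) (A B : {set T}) :
  B \subset A -> independent e A -> independent e B.
Proof.
move=> sBA /indP h; apply/indP => x y xB yB; apply: h; exact: (subsetP sBA).
Qed.

Lemma ind1 (T : finType) (e : rel T) (b : T) : irreflexive e -> independent e [set b].
Proof. by move=> irr; apply/indP => x y; rewrite !inE => /eqP -> /eqP ->; rewrite irr. Qed.

Lemma ind0 (T : finType) (e : rel T) : independent e set0.
Proof. by apply/indP => x y; rewrite inE. Qed.

Lemma alpha_ge (T : finType) (e : rel T) (A : {set T}) :
  independent e A -> #|A| <= alpha e.
Proof. by move=> h; rewrite /alpha; apply: (@leq_bigmax_cond _ (fun A : {set T} => independent e A) (fun A : {set T} => #|A|)). Qed.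

Lemma wc_card (T : finType) (e : rel T) (I : {set T}) :
  well_covered e -> maximal_independent e I -> #|I| = alpha e.
Proof.
move=> wc hI.
have [A0 A0i A0m] : {A0 | independent e A0 & alpha e = #|A0|}.
  rewrite /alpha; apply: eq_bigmax_cond; apply/card_gt0P; exists set0; exact: ind0.
have [A1 mA1 sA1] := maxset_exists A0i.
rewrite (wc I A1 hI mA1).
have A1i : independent e A1 by case/maxsetP: mA1.
have := alpha_ge A1i; have := subset_leq_card sA1; lia.
Qed.

Definition nbI (T : finType) (e : rel T) (I X : {set T}) := [set x in I | [exists y in X, e x y]].

Lemma F_lemma (T : finType) (e : rel T) (sym : symmetric e) (wc : well_covered e)
  (I : {set T}) (hI : maximal_independent e I) (X : {set T}) :
  independent e X -> X \subset ~: I -> #|X| <= #|nbI e I X|.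
Proof.
move=> Xi XI.
have Ii : independent e I by case/maxsetP: hI.
set NX := nbI e I X.
have Ui : independent e (X :|: (I :\: NX)).
  apply/indP => x y; rewrite !inE => /orP [xX | /andP [xN xI]] /orP [yX | /andP [yN yI]].
  - by move/indP: Xi; apply.
  - apply/negP => exy; move: yN; rewrite yI /=; apply/negP/negPn.
    by apply/existsP; exists x; rewrite xX sym.
  - apply/negP => exy; move: xN; rewrite xI /=; apply/negP/negPn.
    by apply/existsP; exists y; rewrite yX.
  - by move/indP: Ii; apply.
have [Z mZ sZ] := maxset_exists Ui.
have cZ := wc Z I mZ hI.
have h1 : X \subset Z :\: I.
  apply/subsetP => x xX; rewrite inE (subsetP sZ) ?inE ?xX ?andbT //.
  by have := subsetP XI x xX; rewrite inE.
have h2 : I :\: Z \subset NX.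
  apply/subsetP => x; rewrite inE => /andP [xZ xI]; apply/negPn/negP => xN.
  by move: xZ; rewrite (subsetP sZ) // !inE; move: xN; rewrite /NX /nbI inE xI /= => ->; rewrite orbT.
have := cardsID I Z; have := cardsID Z I; rewrite setIC.
have := subset_leq_card h1; have := subset_leq_card h2; lia.
Qed.

Lemma hall_cond (T : finType) (e : rel T) (sym : symmetric e) (irr : irreflexive e)
  (noiso : no_isolated e) (wc : well_covered e)
  (I : {set T}) (hI : maximal_independent e I) :
  forall S : {set T}, S \subset I -> #|S| <= #|Nb (fun x => [set y | e x y]) S|.
Proof.
set F := fun x => [set y | e x y].
have Ii : independent e I by case/maxsetP: hI.
move=> S0 sS0; rewrite leqNgt; apply/negP => bad.
pose P := fun S : {set T} => (S \subset I) && (#|Nb F S| < #|S|).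
have [S mS _] := @minset_exists _ P S0 (introT andP (conj sS0 bad)).
case/minsetP: mS => /andP [sS hS] minS.
set B := Nb F S.
have sur : forall W : {set T}, W \subset B -> W != set0 ->
    #|W| < #|[set x in S | [exists y in W, e x y]]|.
  move=> W sW nW; set A1 := [set x in S | [exists y in W, e x y]].
  have A1S : A1 \subset S by apply/subsetP => x; rewrite inE => /andP [].
  have [x1 x1A] : exists x, x \in A1.
    case/set0Pn: nW => w wW; case/bigcupP: (subsetP sW w wW) => x xS; rewrite inE => exw.
    by exists x; rewrite inE xS /=; apply/existsP; exists w; rewrite wW.
  set S' := S :\: A1.
  have notP : ~~ P S'.
    apply/negP => PS'; have E := minS _ PS' (subsetDl _ _).
    by move: (subsetP A1S _ x1A); rewrite -E inE x1A.
  move: notP; rewrite /P negb_and (subset_trans (subsetDl _ _) sS) /= -leqNgt => hS'.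
  have sub : Nb F S' \subset B :\: W.
    apply/subsetP => y /bigcupP [x]; rewrite inE => /andP [xA xS]; rewrite inE => exy.
    rewrite inE; apply/andP; split; last by apply/bigcupP; exists x; rewrite ?inE.
    apply/negP => yW; move: xA; rewrite inE xS /=; apply/negP/negPn.
    by apply/existsP; exists y; rewrite yW.
  have := subset_leq_card sub; rewrite (cardsDS sW).
  move: hS'; rewrite /S' (cardsDS A1S) => hS'.
  have := subset_leq_card sW; have := subset_leq_card A1S; move: hS; rewrite -/B; lia.
have [s sSs] : exists s, s \in S.
  by apply/set0Pn; rewrite -card_gt0; move: hS; case: #|S|.
have [b esb] : exists b, e s b.
  by have := noiso s; rewrite /isolated negb_forall => /existsP [b /negPn]; exists b.
have bB : b \in B by apply/bigcupP; exists s; rewrite ?inE.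
have sI : s \in I by exact: (subsetP sS).
have bI : b \notin I.
  by apply/negP => bI; move/indP: Ii => /(_ s b sI bI); rewrite esb.
have [Z mZ sZ] := maxset_exists (ind1 b irr).
have Zi : independent e Z by case/maxsetP: mZ.
have bZ : b \in Z by rewrite (subsetP sZ) ?inE.
set Y := Z :\: I.
set A1 := [set x in S | [exists y in Y :&: B, e x y]].
set A2 := nbI e I (Y :\: B).
have h1 : #|Y :&: B| < #|A1|.
  apply: sur; first exact: subsetIr.
  by apply/set0Pn; exists b; rewrite !inE bB bZ bI.
have h2 : #|Y :\: B| <= #|A2|.
  apply: F_lemma => //.
    by apply: (ind_sub _ Zi); apply: subset_trans (subsetDl _ _) (subsetDl _ _).
  by apply/subsetP => y; rewrite !inE => /and3P [_ yI _].
have zin : forall x y, x \in I -> y \in Y -> e x y -> x \in I :\: Z.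
  move=> x y xI; rewrite inE => /andP [_ yZ] exy; rewrite inE xI andbT.
  by apply/negP => xZ; move/indP: Zi => /(_ x y xZ yZ); rewrite exy.
have s12 : A1 :|: A2 \subset I :\: Z.
  apply/subsetP => x; rewrite inE => /orP [].
    rewrite inE => /andP [xS /existsP [y /andP [yYB exy]]].
    by apply: (zin x y) => //; [exact: (subsetP sS) | move: yYB; rewrite inE => /andP []].
  rewrite inE => /andP [xI /existsP [y /andP [yYB exy]]].
  by apply: (zin x y) => //; move: yYB; rewrite inE => /andP [].
have d12 : A1 :&: A2 = set0.
  apply/setP => x; rewrite !inE; apply/negP => /andP [/andP [xS _] /andP [_ /existsP [y]]].
  rewrite !inE => /andP [/andP [yB _] exy]; move/negP: yB; apply.
  by apply/bigcupP; exists x; rewrite ?inE.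
have := subset_leq_card s12; rewrite cardsU d12 cards0 subn0.
have cZ := wc Z I mZ hI.
have := cardsID I Z; have := cardsID Z I; rewrite (setIC Z I).
have := cardsID B Y.
move: h1 h2 cZ; rewrite /Y.
move: #|_ :&: B| #|_ :\: B| #|A1| #|A2| #|Z :\: I| #|I :\: Z| #|I :&: Z| #|Z| #|I|.
move=> n1 n2 n3 n4 n5 n6 n7 n8 n9; clear -n1 n2 n3 n4 n5 n6 n7 n8 n9; lia.
Qed.

Lemma vwc_pm (T : finType) (e : rel T) (sym : symmetric e) (irr : irreflexive e)
  (noiso : no_isolated e) : very_well_covered e -> exists M, perfect_matching e M.
Proof.
case=> wc [_ hal].
have [I mI _] := maxset_exists (ind0 e).
have Ii : independent e I by case/maxsetP: mI.
have cI := wc_card wc mI.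
have [f [fF finj]] := hall (hall_cond sym irr noiso wc mI).
have efx : forall x, x \in I -> e x (f x) by move=> x /fF; rewrite inE.
have fnI : forall x, x \in I -> f x \notin I.
  by move=> x xI; apply/negP => fI; move/indP: Ii => /(_ x (f x) xI fI); rewrite efx.
have im : f @: I = ~: I.
  apply/eqP; rewrite eqEcard; apply/andP; split.
    by apply/subsetP => y /imsetP [x xI ->]; rewrite inE fnI.
  rewrite card_in_imset //; have := cardsC I; lia.
exists [set [set x; f x] | x in I]; apply/andP; split.
  apply/and3P; split.
  - apply/eqP/setP => v; rewrite inE; apply/bigcupP.
    case: (boolP (v \in I)) => vI.
      by exists [set v; f v]; [apply/imsetP; exists v | rewrite set21].
    have : v \in f @: I by rewrite im inE.
    case/imsetP => x xI ->; exists [set x; f x]; [apply/imsetP; exists x | rewrite set22] => //.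
  - apply/trivIsetP => A B /imsetP [x xI ->] /imsetP [y yI ->] neq.
    rewrite -setI_eq0; apply/eqP/setP => z; rewrite !inE.
    apply/negP => /andP [/orP [/eqP zx | /eqP zfx] /orP [/eqP zy | /eqP zfy]].
    + by move: neq; rewrite -zx -zy eqxx.
    + by move: (fnI y yI); rewrite -zfy zx xI.
    + by move: (fnI x xI); rewrite -zfx zy yI.
    + by move: neq; rewrite (finj x y xI yI) ?eqxx // -zfx -zfy.
  - apply/imsetP => [[x xI E]].
    have : x \in [set x; f x] by rewrite set21.
    by rewrite -E inE.
apply/forall_inP => S /imsetP [x xI ->]; apply/existsP; exists x; apply/existsP; exists (f x).
rewrite eqxx efx // andbT andbT.
by apply/negP => /eqP E; move: (fnI x xI); rewrite -E xI.
Qed.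

Lemma sum_in (T : finType) (A I : {set T}) : \sum_(x in A) ((x \in I) : nat) = #|A :&: I|.
Proof.
rewrite (eq_bigr (fun x => if x \in I then 1 else 0)); last by move=> x _; case: (x \in I).
rewrite -big_mkcondr sum1_card; apply: eq_card => x; rewrite !inE.
by [].
Qed.

Lemma card_part (T : finType) (P : {set {set T}}) (I : {set T}) :
  partition P [set: T] -> #|I| = \sum_(C in P) #|C :&: I|.
Proof.
case/and3P => /eqP cov triv _.
have := @big_trivIset T nat 0 addn P (fun x => ((x \in I) : nat)) triv.
rewrite cov sum_in setTI => ->; apply: eq_bigr => C _; exact: sum_in.
Qed.

Lemma clique_ind (T : finType) (e : rel T) (C I : {set T}) :
  clique e C -> independent e I -> #|C :&: I| <= 1.
Proof.
move=> /forall_inP hC /indP hI; rewrite leqNgt; apply/negP => /card_gt1P [x [y [xC yC nxy]]].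
move: xC yC; rewrite !inE => /andP [xC xI] /andP [yC yI].
by move: (hI x y xI yI); have := forall_inP (hC x xC) y yC; rewrite nxy /= => ->.
Qed.

Lemma edge_clique (T : finType) (e : rel T) (sym : symmetric e) (S : {set T}) :
  is_edge e S -> clique e S && (#|S| == 2).
Proof.
case/existsP => x /existsP [y /andP [/andP [nxy exy] /eqP ->]].
rewrite cards2 nxy eqxx andbT.
apply/forall_inP => u uS; apply/forall_inP => v vS; apply/implyP => nuv.
move: uS vS nuv; rewrite !inE => /orP [] /eqP -> /orP [] /eqP ->; rewrite ?eqxx //.
by rewrite sym.
Qed.

Lemma part_card2 (T : finType) (P : {set {set T}}) :
  partition P [set: T] -> (forall C, C \in P -> #|C| = 2) -> #|T| = 2 * #|P|.
Proof.
move=> hP h2; rewrite -cardsT (card_part _ hP).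
rewrite (eq_bigr (fun _ => 2)); first by rewrite sum_nat_const mulnC.
by move=> C CP; rewrite setIT; exact: h2.
Qed.

Lemma part_strong (T : finType) (e : rel T) (P : {set {set T}}) (I : {set T}) :
  partition P [set: T] -> (forall C, C \in P -> strong_clique e C) ->
  maximal_independent e I -> #|I| = #|P|.
Proof.
move=> hP hs mI; have Ii : independent e I by case/maxsetP: mI.
rewrite (card_part _ hP) -sum1_card; apply: eq_bigr => C CP.
have /andP [cl /forallP st] := hs C CP.
have := clique_ind cl Ii; have := st I; rewrite mI /= -card_gt0. lia.
Qed.

Lemma part_vwc (T : finType) (e : rel T) (noiso : no_isolated e) (P : {set {set T}}) :
  partition P [set: T] -> (forall C, C \in P -> strong_clique e C && (#|C| == 2)) ->
  very_well_covered e.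
Proof.
move=> hP h.
have hs : forall C, C \in P -> strong_clique e C by move=> C /h /andP [].
have h2 : forall C, C \in P -> #|C| = 2 by move=> C /h /andP [_ /eqP].
split; first by move=> A B mA mB; rewrite (part_strong hP hs mA) (part_strong hP hs mB).
split => //; rewrite (part_card2 hP h2); congr (2 * _).
apply/eqP; rewrite eqn_leq; apply/andP; split.
  apply/bigmax_leqP => A Ai; have [A' mA' sA'] := maxset_exists Ai.
  by rewrite -(part_strong hP hs mA'); exact: subset_leq_card.
have [I mI _] := maxset_exists (ind0 e).
rewrite -(part_strong hP hs mI); apply: alpha_ge; by case/maxsetP: mI.
Qed.

Lemma pm_strong (T : finType) (e : rel T) (sym : symmetric e) (M : {set {set T}}) :
  very_well_covered e -> perfect_matching e M -> forall S, S \in M -> strong_clique e S.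
Proof.
case=> wc [_ hal] /andP [hP /forall_inP hE] S SM.
have /andP [clS _] := edge_clique sym (hE S SM).
rewrite /strong_clique clS /=; apply/forall_inP => I mI.
have Ii : independent e I by case/maxsetP: mI.
have h2 : forall C, C \in M -> #|C| = 2.
  by move=> C CM; have /andP [_ /eqP] := edge_clique sym (hE C CM).
have cT := part_card2 hP h2.
have cI := wc_card wc mI.
have := card_part I hP; rewrite (bigD1 S SM) /=.
have hle : \sum_(C in M | C != S) #|C :&: I| <= \sum_(C in M | C != S) 1.
  apply: leq_sum => C /andP [CM _]; apply: clique_ind Ii.
  by have /andP [] := edge_clique sym (hE C CM).
move: hle; rewrite sum1_card.
have := cardsD1 S M; rewrite SM.
have : #|[pred C in M | C != S]| = #|M :\ S|.
  by apply: eq_card => C; rewrite !inE andbC.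
rewrite -card_gt0; move: cI hal cT.
move: #|S :&: I| #|[pred C in M | C != S]| (\sum_(i in M | i != S) #|i :&: I|) #|M :\ S| #|M| #|I| (alpha e) #|T| => k a b c d f g h.
move=> q1 q2 q3 q4 q5 q6 q7; clear -q1 q2 q3 q4 q5 q6 q7; lia.
Qed.
End Graph.

Unset Implicit Arguments.
Theorem mainTheorem5 (T : finType) (e : rel T) :
  simple_graph e -> no_isolated e ->
  (very_well_covered e <->
     exists M : {set {set T}}, perfect_matching e M && [forall S in M, strong_clique e S])
  /\ (very_well_covered e <->
     (exists M : {set {set T}}, perfect_matching e M) /\
     (forall M : {set {set T}}, perfect_matching e M -> forall S, S \in M -> strong_clique e S))
  /\ (very_well_covered e <->
     exists P : {set {set T}}, partition P [set: T] &&
        [forall C in P, strong_clique e C && (#|C| == 2)])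
  /\ (very_well_covered e -> localizable e).
Proof.
move=> [sym irr] noiso.
have h12 : very_well_covered e ->
    exists M : {set {set T}}, perfect_matching e M && [forall S in M, strong_clique e S].
  move=> v; have [M pmM] := vwc_pm sym irr noiso v.
  exists M; rewrite pmM /=; apply/forall_inP => S SM; exact: (pm_strong sym v pmM).
have h24 : (exists M : {set {set T}}, perfect_matching e M && [forall S in M, strong_clique e S]) ->
    exists P : {set {set T}}, partition P [set: T] &&
        [forall C in P, strong_clique e C && (#|C| == 2)].
  case=> M /andP [/andP [pM /forall_inP hE] /forall_inP hS]; exists M; rewrite pM /=.
  apply/forall_inP => C CM; rewrite hS //=.
  by have /andP [] := edge_clique sym (hE C CM).
have h41 : (exists P : {set {set T}}, partition P [set: T] &&
        [forall C in P, strong_clique e C && (#|C| == 2)]) -> very_well_covered e.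
  case=> P /andP [pP /forall_inP hP]; exact: (part_vwc noiso pP).
split; first by split; [exact: h12 | move=> h; apply: h41; exact: h24].
split.
  split; first by move=> v; split; [exact: vwc_pm | move=> M pmM; exact: pm_strong].
  case=> [[M pmM] hall]; apply: h41; apply: h24; exists M; rewrite pmM /=.
  by apply/forall_inP => S; exact: hall.
split; first by split; [move=> v; apply: h24; exact: h12 | exact: h41].
move=> v; have [P /andP [pP /forall_inP hP]] := h24 (h12 v).
by exists P; rewrite pP /=; apply/forall_inP => C /hP /andP [].
Qed.
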